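(* Let $n\ge 2$ be an integer, $k,c_b>0$, $\rho_0>0$, and let $\lambda_{1,0}\le\cdots\le\lambda_{n,0}$ be real numbers. Consider the system $$\lambda_i'=-\lambda_i^2+\frac{k}{n}(\rho-c_b)\ (i=1,\dots,n),\qquad \rho'=-\rho\lambda,\quad \lambda=\sum_{i=1}^n\lambda_i,\qquad \rho(0)=\rho_0,\ \lambda_i(0)=\lambda_{i,0},$$ and suppose its maximal interval of existence is $[0,t_B)$ with $0<t_B<\infty$. Then there exist integers $1\le J_1\le J_2\le n$ such that $\lim_{t\to t_B^-}\lambda_i(t)=-\infty$ for $1\le i\le J_1$ and $\lim_{t\to t_B^-}\lambda_i(t)=+\infty$ for $J_2<i\le n$.
   Context: Solutions are real-valued and continuously differentiable on $[0,t_B)$. If $J_2=n$ the second condition is vacuous. *)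

(* Defs.v *)
From Stdlib Require Import Reals Lra Lia.
From Coquelicot Require Import Coquelicot.
Open Scope R_scope.

(* Total mass of the lambda_i, i = 1..n (indices are the paper's 1-based ones). *)
Definition lam_sum (n : nat) (lam : nat -> R -> R) (t : R) : R :=
  sum_n_m (fun i => lam i t) 1 n.

(* (lam, rho) is a solution of the system on [0,T):
   - initial conditions at t = 0;
   - differentiable on (0,T) with the ODE holding there;
   - right-continuous at 0 (so the solution is continuous on [0,T)).
   Since the right-hand side is continuous, this is the same as a C^1
   solution on [0,T) with one-sided derivative at 0. *)
Definition is_sol_on (n : nat) (k cb rho0 : R) (lam0 : nat -> R) (T : R)
    (lam : nat -> R -> R) (rho : R -> R) : Prop :=
  rho 0 = rho0 /\
  (forall i, (1 <= i <= n)%nat -> lam i 0 = lam0 i) /\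
  (forall t, 0 < t < T ->
     (forall i, (1 <= i <= n)%nat ->
        is_derive (lam i) t (- (lam i t) ^ 2 + k / INR n * (rho t - cb))) /\
     is_derive rho t (- rho t * lam_sum n lam t)) /\
  filterlim rho (at_right 0) (locally (rho 0)) /\
  (forall i, (1 <= i <= n)%nat ->
     filterlim (lam i) (at_right 0) (locally (lam i 0))).

(* Main.v *)
Require Import Defs.
From Stdlib Require Import Reals Lra Lia Classical.
From Coquelicot Require Import Coquelicot.
Open Scope R_scope.

Lemma lip_cont (f : R -> R) K :
  (forall x y, Rabs (f x - f y) <= K * Rabs (x - y)) -> forall x, continuous f x.
Proof.
  intros H x. apply continuity_pt_filterlim.
  intros eps Heps. exists (eps / (Rabs K + 1)). split.
  { apply Rdiv_lt_0_compat; [lra| pose proof (Rabs_pos K); lra]. }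
  intros y [_ Hy]. unfold dist in *; simpl in *; unfold R_dist in *.
  eapply Rle_lt_trans. apply H.
  pose proof (Rabs_pos K). pose proof (Rabs_pos (y - x)).
  apply Rle_lt_trans with (Rabs K * Rabs (y - x)).
  { apply Rmult_le_compat_r; [lra| apply Rle_abs]. }
  apply Rle_lt_trans with ((Rabs K + 1) * Rabs (y - x)); [rewrite Rmult_plus_distr_r; lra|].
  apply Rlt_le_trans with ((Rabs K + 1) * (eps / (Rabs K + 1))).
  { apply Rmult_lt_compat_l; lra. }
  right; field; lra.
Qed.

Lemma cont_ex_RInt (g : R -> R) : (forall x, continuous g x) -> forall a b, ex_RInt g a b.
Proof. intros H a b. apply (ex_RInt_continuous (V:=R_CompleteNormedModule)). intros; apply H. Qed.

Lemma RInt_der (g : R -> R) a : (forall x, continuous g x) ->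
  forall t, is_derive (fun u => RInt g a u) t (g t).
Proof.
  intros H t. apply is_derive_RInt with (a := a).
  - apply filter_forall. intros b. apply RInt_correct. apply cont_ex_RInt; auto.
  - apply H.
Qed.

Lemma RInt_abs_bound (g : R -> R) C : (forall x, continuous g x) ->
  (forall x, Rabs (g x) <= C) -> forall a b, Rabs (RInt g a b) <= C * Rabs (b - a).
Proof.
  intros H HC a b. destruct (Rle_dec a b).
  - rewrite (Rabs_right (b - a)) by lra. rewrite Rmult_comm.
    apply abs_RInt_le_const; auto. apply cont_ex_RInt; auto.
  - rewrite <- (opp_RInt_swap g b a) by (apply cont_ex_RInt; auto).
    unfold opp; simpl. rewrite Rabs_Ropp.
    rewrite (Rabs_left (b - a)) by lra.
    replace (- (b - a)) with (a - b) by ring. rewrite Rmult_comm.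
    apply abs_RInt_le_const; [lra| apply cont_ex_RInt; auto| auto].
Qed.

Lemma der_cont_pt f x l : is_derive f x l -> continuity_pt f x.
Proof.
  intros H. apply continuity_pt_filterlim. apply (ex_derive_continuous (V:=R_NormedModule)). exists l; exact H.
Qed.

Lemma mono_der (f df : R -> R) a b : a <= b ->
  (forall x, a <= x <= b -> is_derive f x (df x)) ->
  (forall x, a <= x <= b -> 0 <= df x) -> f a <= f b.
Proof.
  intros Hab Hd Hp.
  destruct (MVT_gen f a b df) as [c [Hc Heq]].
  - intros x Hx. rewrite Rmin_left, Rmax_right in Hx by lra. apply Hd; lra.
  - intros x Hx. rewrite Rmin_left, Rmax_right in Hx by lra. eapply der_cont_pt. apply Hd; lra.
  - rewrite Rmin_left, Rmax_right in Hc by lra.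
    assert (0 <= df c * (b - a)) by (apply Rmult_le_pos; [apply Hp; lra| lra]). lra.
Qed.

Lemma glue_der (f g h : R -> R) x l :
  (forall u, u <= x -> f u = g u) -> (forall u, x < u -> f u = h u) ->
  g x = h x -> is_derive g x l -> is_derive h x l -> is_derive f x l.
Proof.
  intros Hg Hh Hx Dg Dh. apply is_derive_Reals. apply is_derive_Reals in Dg, Dh.
  intros eps Heps. destruct (Dg eps Heps) as [d1 H1]. destruct (Dh eps Heps) as [d2 H2].
  assert (Hd : 0 < Rmin d1 d2) by (apply Rmin_pos; apply cond_pos).
  exists (mkposreal _ Hd). intros e He Hlt. simpl in Hlt.
  assert (e < d1) by (eapply Rlt_le_trans; [|apply Rmin_l]; eapply Rle_lt_trans; [apply Rle_abs|]; exact Hlt).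
  assert (-e < d1) by (eapply Rlt_le_trans; [|apply Rmin_l]; eapply Rle_lt_trans; [|exact Hlt]; rewrite <- Rabs_Ropp; apply Rle_abs).
  assert (e < d2) by (eapply Rlt_le_trans; [|apply Rmin_r]; eapply Rle_lt_trans; [apply Rle_abs|]; exact Hlt).
  assert (-e < d2) by (eapply Rlt_le_trans; [|apply Rmin_r]; eapply Rle_lt_trans; [|exact Hlt]; rewrite <- Rabs_Ropp; apply Rle_abs).
  rewrite (Hg x) by lra.
  destruct (Rle_dec (x + e) x).
  - rewrite (Hg (x+e)) by lra. apply H1; auto.
    apply Rabs_def1; lra.
  - rewrite (Hh (x+e)) by lra. rewrite Hx. apply H2; auto. apply Rabs_def1; lra.
Qed.

Lemma lim_bound (u : nat -> R) (l a b : R) N : is_lim_seq u l ->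
  (forall p, (N <= p)%nat -> Rabs (u p - a) <= b) -> Rabs (l - a) <= b.
Proof.
  intros Hl Hb. apply Rnot_lt_le. intros Hc.
  apply is_lim_seq_spec in Hl. unfold is_lim_seq' in Hl.
  assert (He : 0 < Rabs (l - a) - b) by lra.
  destruct (Hl (mkposreal _ He)) as [N' HN]. simpl in HN.
  specialize (HN (max N N') ltac:(lia)). specialize (Hb (max N N') ltac:(lia)).
  assert (Rabs (l - a) <= Rabs (l - u (max N N')) + Rabs (u (max N N') - a)).
  { replace (l - a) with ((l - u (max N N')) + (u (max N N') - a)) by ring. apply Rabs_triang. }
  rewrite (Rabs_minus_sym l (u _)) in H. lra.
Qed.

Lemma zero_geom x K : (forall m, Rabs x <= K * (1/2)^m) -> x = 0.
Proof.
  intros H. destruct (Req_dec x 0) as [|Hx]; auto. exfalso.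
  assert (Hpos : 0 < Rabs x) by (apply Rabs_pos_lt; auto).
  assert (HK : 0 < K). { specialize (H O). simpl in H. lra. }
  destruct (pow_lt_1_zero (1/2) ltac:(rewrite Rabs_right; lra) (Rabs x / K) ltac:(apply Rdiv_lt_0_compat; lra)) as [N HN].
  specialize (HN N (le_n N)). specialize (H N).
  rewrite Rabs_right in HN by (apply Rle_ge, pow_le; lra).
  apply (Rmult_lt_compat_l K) in HN; auto.
  replace (K * (Rabs x / K)) with (Rabs x) in HN by (field; lra). lra.
Qed.

Definition Fv (n : nat) (k cb : R) (j : nat) (y : nat -> R) : R :=
  match j with
  | O => - y O * sum_n_m y 1 n
  | S _ => - (y j) ^ 2 + k / INR n * (y O - cb)
  end.

Lemma sum_diff_le (u v : nat -> R) e m :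
  (forall i, (1 <= i <= m)%nat -> Rabs (u i - v i) <= e) ->
  Rabs (sum_n_m u 1 m - sum_n_m v 1 m) <= INR m * e.
Proof.
  induction m as [|m IH]; intros H.
  - rewrite !sum_n_m_zero by lia. simpl. unfold zero; simpl. rewrite Rminus_0_r, Rabs_R0. lra.
  - rewrite !sum_n_Sm by lia. rewrite S_INR. unfold plus; simpl.
    replace (sum_n_m u 1 m + u (S m) - (sum_n_m v 1 m + v (S m)))
      with ((sum_n_m u 1 m - sum_n_m v 1 m) + (u (S m) - v (S m))) by ring.
    eapply Rle_trans. apply Rabs_triang.
    rewrite Rmult_plus_distr_r, Rmult_1_l.
    apply Rplus_le_compat. apply IH. intros; apply H; lia. apply H; lia.
Qed.

Lemma Fv_ext n k cb j y z : (j <= n)%nat -> (forall i, (i <= n)%nat -> y i = z i) ->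
  Fv n k cb j y = Fv n k cb j z.
Proof.
  intros Hj H. destruct j as [|j]; simpl.
  - rewrite (H O) by lia. rewrite (sum_n_m_ext_loc y z) by (intros; apply H; lia). reflexivity.
  - rewrite (H O), (H (S j)) by lia. reflexivity.
Qed.

Definition Cst n k cb B := INR n * B * B + B * B + Rabs (k / INR n) * (B + Rabs cb) + 1.
Definition Lc n k B := 2 * INR n * B + 2 * B + Rabs (k / INR n) + 1.

Lemma Fv_bound n k cb B y j : 0 <= B -> (j <= n)%nat ->
  (forall i, (i <= n)%nat -> Rabs (y i) <= B) -> Rabs (Fv n k cb j y) <= Cst n k cb B.
Proof.
  intros HB Hj H. unfold Cst.
  assert (Hn : 0 <= INR n) by apply pos_INR.
  assert (0 <= Rabs (k / INR n)) by apply Rabs_pos.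
  assert (0 <= Rabs cb) by apply Rabs_pos.
  destruct j as [|j]; simpl.
  - assert (Hs : Rabs (sum_n_m y 1 n - sum_n_m (fun _ => 0) 1 n) <= INR n * B).
    { apply sum_diff_le. intros. rewrite Rminus_0_r. apply H; lia. }
    rewrite sum_n_m_const, Rmult_0_r, Rminus_0_r in Hs.
    rewrite Rabs_mult, Rabs_Ropp.
    assert (HY0 := H O ltac:(lia)).
    assert (Rabs (y O) * Rabs (sum_n_m y 1 n) <= B * (INR n * B)).
    { apply Rmult_le_compat; auto using Rabs_pos. }
    assert (0 <= B * B) by nra. nra.
  - eapply Rle_trans. apply Rabs_triang. rewrite Rabs_Ropp, Rabs_mult.
    assert (HY1 := H (S j) Hj). assert (HY0 := H O ltac:(lia)).
    rewrite Rmult_1_r, Rabs_mult.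
    assert (Rabs (y O - cb) <= B + Rabs cb).
    { unfold Rminus. eapply Rle_trans. apply Rabs_triang. rewrite Rabs_Ropp. lra. }
    assert (Rabs (y (S j)) * Rabs (y (S j)) <= B * B).
    { apply Rmult_le_compat; auto using Rabs_pos. }
    assert (Rabs (k / INR n) * Rabs (y O - cb) <= Rabs (k / INR n) * (B + Rabs cb)).
    { apply Rmult_le_compat_l; auto. }
    assert (0 <= INR n * B * B) by (apply Rmult_le_pos; [apply Rmult_le_pos|]; auto).
    lra.
Qed.

Lemma Fv_lip n k cb B y z e j : 0 <= B -> (j <= n)%nat ->
  (forall i, (i <= n)%nat -> Rabs (y i) <= B) ->
  (forall i, (i <= n)%nat -> Rabs (z i) <= B) ->
  (forall i, (i <= n)%nat -> Rabs (y i - z i) <= e) ->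
  Rabs (Fv n k cb j y - Fv n k cb j z) <= Lc n k B * e.
Proof.
  intros HB Hj Hy Hz He. unfold Lc.
  assert (Hn : 0 <= INR n) by apply pos_INR.
  assert (Hk : 0 <= Rabs (k / INR n)) by apply Rabs_pos.
  assert (He0 : 0 <= e) by (eapply Rle_trans; [apply Rabs_pos| apply (He O); lia]).
  destruct j as [|j]; unfold Fv; cbv beta iota.
  - assert (Hs : Rabs (sum_n_m y 1 n - sum_n_m z 1 n) <= INR n * e).
    { apply sum_diff_le. intros. apply He; lia. }
    assert (Hsy : Rabs (sum_n_m y 1 n - sum_n_m (fun _ => 0) 1 n) <= INR n * B).
    { apply sum_diff_le. intros. rewrite Rminus_0_r. apply Hy; lia. }
    rewrite sum_n_m_const, Rmult_0_r, Rminus_0_r in Hsy.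
    replace (- y O * sum_n_m y 1 n - - z O * sum_n_m z 1 n)
      with (- ((y O - z O) * sum_n_m y 1 n + z O * (sum_n_m y 1 n - sum_n_m z 1 n))) by ring.
    rewrite Rabs_Ropp. eapply Rle_trans. apply Rabs_triang. rewrite !Rabs_mult.
    assert (Rabs (y O - z O) * Rabs (sum_n_m y 1 n) <= e * (INR n * B)).
    { apply Rmult_le_compat; auto using Rabs_pos; apply He; lia. }
    assert (Rabs (z O) * Rabs (sum_n_m y 1 n - sum_n_m z 1 n) <= B * (INR n * e)).
    { apply Rmult_le_compat; auto using Rabs_pos; apply Hz; lia. }
    assert (0 <= (2 * B + Rabs (k / INR n) + 1) * e) by (apply Rmult_le_pos; lra).
    nra.
  - replace (- y (S j) ^ 2 + k / INR n * (y O - cb) - (- z (S j) ^ 2 + k / INR n * (z O - cb)))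
      with (- ((y (S j) - z (S j)) * (y (S j) + z (S j))) + k / INR n * (y O - z O)) by ring.
    eapply Rle_trans. apply Rabs_triang. rewrite Rabs_Ropp, !Rabs_mult.
    assert (Rabs (y (S j) + z (S j)) <= 2 * B).
    { eapply Rle_trans. apply Rabs_triang. assert (H1 := Hy (S j) Hj). assert (H2 := Hz (S j) Hj). lra. }
    assert (Rabs (y (S j) - z (S j)) * Rabs (y (S j) + z (S j)) <= e * (2 * B)).
    { apply Rmult_le_compat; auto using Rabs_pos. }
    assert (Rabs (k / INR n) * Rabs (y O - z O) <= Rabs (k / INR n) * e).
    { apply Rmult_le_compat_l; auto. apply He; lia. }
    assert (0 <= (2 * INR n * B) * e) by (apply Rmult_le_pos; [apply Rmult_le_pos|]; lra).
    nra.
Qed.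

Definition clamp t1 d t := Rmax t1 (Rmin (t1 + d) t).

Lemma clamp_lip t1 d t t' : 0 <= d -> Rabs (clamp t1 d t - clamp t1 d t') <= Rabs (t - t').
Proof.
  intros Hd. unfold clamp, Rmax, Rmin, Rabs.
  repeat destruct Rle_dec; repeat destruct Rcase_abs; lra.
Qed.

Lemma clamp_range t1 d t : 0 <= d -> t1 <= clamp t1 d t <= t1 + d.
Proof. intros Hd. unfold clamp, Rmax, Rmin. repeat destruct Rle_dec; lra. Qed.

Lemma clamp_id t1 d t : t1 <= t <= t1 + d -> clamp t1 d t = t.
Proof. intros H. unfold clamp, Rmax, Rmin. repeat destruct Rle_dec; lra. Qed.

Fixpoint pic n k cb t1 d (y1 : nat -> R) (m : nat) : nat -> R -> R :=
  match m with
  | O => fun j _ => y1 j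
  | S m' => fun j t => y1 j + RInt (fun s => Fv n k cb j (fun i => pic n k cb t1 d y1 m' i s)) t1 (clamp t1 d t)
  end.

Lemma comp_cont n k cb B C (p : nat -> R -> R) j : 0 <= B -> (j <= n)%nat ->
  (forall i s, (i <= n)%nat -> Rabs (p i s) <= B) ->
  (forall i s s', (i <= n)%nat -> Rabs (p i s - p i s') <= C * Rabs (s - s')) ->
  forall x, continuous (fun s => Fv n k cb j (fun i => p i s)) x.
Proof.
  intros HB Hj Hb Hl. apply (lip_cont _ (Lc n k B * C)).
  intros x y. rewrite Rmult_assoc. apply Fv_lip; auto.
Qed.

Lemma pic_inv n k cb t1 d y1 M : 0 <= M -> 0 < d ->
  d * Cst n k cb (M + 1) <= 1 ->
  (forall j, (j <= n)%nat -> Rabs (y1 j) <= M) ->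
  forall m, (forall j t, (j <= n)%nat -> Rabs (pic n k cb t1 d y1 m j t - y1 j) <= 1) /\
   (forall j t t', (j <= n)%nat -> Rabs (pic n k cb t1 d y1 m j t - pic n k cb t1 d y1 m j t') <= Cst n k cb (M + 1) * Rabs (t - t')).
Proof.
  intros HM Hd HdC Hy1.
  set (C := Cst n k cb (M + 1)).
  assert (HC : 0 <= C).
  { unfold C. eapply Rle_trans. apply Rabs_pos. apply (Fv_bound n k cb (M+1) (fun _ => 0) O); try lra; try lia.
    intros. rewrite Rabs_R0. lra. }
  induction m as [|m [IHb IHl]].
  - split; intros; simpl.
    + rewrite Rminus_diag, Rabs_R0. lra.
    + rewrite Rminus_diag, Rabs_R0. apply Rmult_le_pos; auto using Rabs_pos.
  - assert (Hbox : forall i s, (i <= n)%nat -> Rabs (pic n k cb t1 d y1 m i s) <= M + 1).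
    { intros i s Hi. specialize (IHb i s Hi). specialize (Hy1 i Hi).
      replace (pic n k cb t1 d y1 m i s) with ((pic n k cb t1 d y1 m i s - y1 i) + y1 i) by ring.
      eapply Rle_trans. apply Rabs_triang. lra. }
    assert (Hc : forall j, (j <= n)%nat -> forall x, continuous (fun s => Fv n k cb j (fun i => pic n k cb t1 d y1 m i s)) x).
    { intros j Hj. apply (comp_cont n k cb (M+1) C); auto; lra. }
    assert (Hg : forall j, (j <= n)%nat -> forall x, Rabs (Fv n k cb j (fun i => pic n k cb t1 d y1 m i x)) <= C).
    { intros j Hj x. apply Fv_bound; auto. lra. }
    split.
    + intros j t Hj. simpl. assert (Har : forall a b : R, a + b - a = b) by (intros; ring). rewrite Har.
      eapply Rle_trans. apply RInt_abs_bound; auto.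
      pose proof (clamp_range t1 d t ltac:(lra)).
      rewrite Rabs_right by lra.
      apply Rle_trans with (C * d). apply Rmult_le_compat_l; lra. rewrite Rmult_comm. unfold C; lra.
    + intros j t t' Hj. simpl.
      set (g := fun s => Fv n k cb j (fun i => pic n k cb t1 d y1 m i s)).
      assert (Heq : RInt g t1 (clamp t1 d t) = RInt g t1 (clamp t1 d t') + RInt g (clamp t1 d t') (clamp t1 d t)).
      { symmetry. apply (RInt_Chasles (V:=R_CompleteNormedModule)); apply cont_ex_RInt; apply Hc; auto. }
      rewrite Heq.
      assert (Har : forall a b c : R, a + (b + c) - (a + b) = c) by (intros; ring).
      rewrite Har.
      eapply Rle_trans. apply RInt_abs_bound. apply Hc; auto. intros x; apply Hg; auto. apply Rmult_le_compat_l. exact HC.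
      apply clamp_lip; lra.
Qed.

Lemma pic_S n k cb t1 d y1 m j t : pic n k cb t1 d y1 (S m) j t =
  y1 j + RInt (fun s => Fv n k cb j (fun i => pic n k cb t1 d y1 m i s)) t1 (clamp t1 d t).
Proof. reflexivity. Qed.

Lemma cont_minus_R (f g : R -> R) x : continuous f x -> continuous g x -> continuous (fun s => f s - g s) x.
Proof.
  intros Hf Hg. apply continuity_pt_filterlim. apply continuity_pt_filterlim in Hf, Hg.
  apply (continuity_pt_minus f g x Hf Hg).
Qed.

Lemma half_pos m : 0 < (1/2)^m.
Proof. apply pow_lt; lra. Qed.

Lemma half_mono N m : (N <= m)%nat -> (1/2)^m <= (1/2)^N.
Proof.
  intros H. replace m with (N + (m - N))%nat by lia. rewrite pow_add.
  assert ((1/2)^(m-N) <= 1).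
  { induction (m - N)%nat as [|q IH]; simpl; [lra|]. pose proof (half_pos q). lra. }
  pose proof (half_pos N). nra.
Qed.

Lemma pic_contr n k cb t1 d y1 M : 0 <= M -> 0 < d ->
  d * Cst n k cb (M + 1) <= 1 -> d * Lc n k (M + 1) <= 1/2 ->
  (forall j, (j <= n)%nat -> Rabs (y1 j) <= M) ->
  forall m j t, (j <= n)%nat ->
    Rabs (pic n k cb t1 d y1 (S m) j t - pic n k cb t1 d y1 m j t) <= (1/2)^m.
Proof.
  intros HM Hd HdC HdL Hy1.
  pose proof (pic_inv n k cb t1 d y1 M HM Hd HdC Hy1) as Hinv.
  set (C := Cst n k cb (M + 1)) in *. set (L := Lc n k (M + 1)) in *.
  assert (HC : 0 <= C).
  { unfold C. eapply Rle_trans. apply Rabs_pos. apply (Fv_bound n k cb (M+1) (fun _ => 0) O); try lra; try lia.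
    intros. rewrite Rabs_R0. lra. }
  assert (Hbox : forall m i s, (i <= n)%nat -> Rabs (pic n k cb t1 d y1 m i s) <= M + 1).
  { intros m i s Hi. destruct (Hinv m) as [IHb _]. specialize (IHb i s Hi). specialize (Hy1 i Hi).
    replace (pic n k cb t1 d y1 m i s) with ((pic n k cb t1 d y1 m i s - y1 i) + y1 i) by ring.
    eapply Rle_trans. apply Rabs_triang. lra. }
  assert (Hc : forall m j, (j <= n)%nat -> forall x, continuous (fun s => Fv n k cb j (fun i => pic n k cb t1 d y1 m i s)) x).
  { intros m j Hj. apply (comp_cont n k cb (M+1) C); auto; try lra. apply Hinv. }
  induction m as [|m IH]; intros j t Hj.
  - simpl pic at 2. destruct (Hinv 1%nat) as [Hb _]. simpl. apply Hb; auto.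
  - rewrite (pic_S n k cb t1 d y1 (S m) j t), (pic_S n k cb t1 d y1 m j t).
    set (g1 := fun s => Fv n k cb j (fun i => pic n k cb t1 d y1 (S m) i s)).
    set (g0 := fun s => Fv n k cb j (fun i => pic n k cb t1 d y1 m i s)).
    assert (Heq : RInt (fun s => g1 s - g0 s) t1 (clamp t1 d t) = RInt g1 t1 (clamp t1 d t) - RInt g0 t1 (clamp t1 d t)).
    { apply (RInt_minus (V:=R_CompleteNormedModule)); apply cont_ex_RInt; apply Hc; auto. }
    assert (Har : forall a b c : R, a + b - (a + c) = b - c) by (intros; ring).
    rewrite Har. fold g1 g0. rewrite <- Heq.
    eapply Rle_trans. apply (RInt_abs_bound _ (L * (1/2)^m)).
    + intros x. apply cont_minus_R; apply Hc; auto.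
    + intros x. unfold g1, g0. apply Fv_lip; [lra | auto | intros; apply Hbox; auto | intros; apply Hbox; auto | intros i Hi; apply IH; auto].
    + pose proof (clamp_range t1 d t ltac:(lra)). rewrite Rabs_right by lra.
      pose proof (half_pos m).
      apply Rle_trans with (L * (1/2)^m * d). apply Rmult_le_compat_l. 
      apply Rmult_le_pos; [unfold L, Lc; pose proof (pos_INR n); pose proof (Rabs_pos (k / INR n)); nra| lra]. lra.
      simpl. nra.
Qed.

Lemma pic_tail n k cb t1 d y1 M : 0 <= M -> 0 < d ->
  d * Cst n k cb (M + 1) <= 1 -> d * Lc n k (M + 1) <= 1/2 ->
  (forall j, (j <= n)%nat -> Rabs (y1 j) <= M) ->
  forall p m j t, (j <= n)%nat ->
    Rabs (pic n k cb t1 d y1 (m + p) j t - pic n k cb t1 d y1 m j t) <= 2 * ((1/2)^m - (1/2)^(m+p)).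
Proof.
  intros HM Hd HdC HdL Hy1 p. induction p as [|p IH]; intros m j t Hj.
  - rewrite Nat.add_0_r, Rminus_diag, Rabs_R0. lra.
  - rewrite Nat.add_succ_r.
    replace (pic n k cb t1 d y1 (S (m + p)) j t - pic n k cb t1 d y1 m j t)
      with ((pic n k cb t1 d y1 (S (m + p)) j t - pic n k cb t1 d y1 (m + p) j t) + (pic n k cb t1 d y1 (m + p) j t - pic n k cb t1 d y1 m j t)) by ring.
    eapply Rle_trans. apply Rabs_triang.
    pose proof (pic_contr n k cb t1 d y1 M HM Hd HdC HdL Hy1 (m + p) j t Hj).
    specialize (IH m j t Hj). change ((1/2)^(S (m+p))) with (1/2 * (1/2)^(m+p)). lra.
Qed.

Lemma pic_lim n k cb t1 d y1 M : 0 <= M -> 0 < d ->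
  d * Cst n k cb (M + 1) <= 1 -> d * Lc n k (M + 1) <= 1/2 ->
  (forall j, (j <= n)%nat -> Rabs (y1 j) <= M) ->
  forall j t, (j <= n)%nat ->
   is_lim_seq (fun m => pic n k cb t1 d y1 m j t) (real (Lim_seq (fun m => pic n k cb t1 d y1 m j t))).
Proof.
  intros HM Hd HdC HdL Hy1 j t Hj.
  apply Lim_seq_correct'. apply ex_lim_seq_cauchy_corr.
  intros eps.
  destruct (pow_lt_1_zero (1/2) ltac:(rewrite Rabs_right; lra) (eps / 2) ltac:(pose proof (cond_pos eps); lra)) as [N HN].
  exists N. intros a b Ha Hb.
  assert (Hgen : forall a b, (N <= a)%nat -> (a <= b)%nat ->
     Rabs (pic n k cb t1 d y1 b j t - pic n k cb t1 d y1 a j t) < eps).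
  { intros a' b' Ha' Hab. replace b' with (a' + (b' - a'))%nat by lia.
    eapply Rle_lt_trans. apply (pic_tail n k cb t1 d y1 M); auto.
    specialize (HN N (le_n N)). rewrite Rabs_right in HN by (apply Rle_ge, pow_le; lra).
    pose proof (half_mono N a' Ha'). pose proof (half_pos (a' + (b' - a'))). lra. }
  destruct (Nat.le_ge_cases a b).
  - rewrite Rabs_minus_sym. apply Hgen; auto.
  - apply Hgen; auto.
Qed.

Definition dl n k cb M := / (2 * (Cst n k cb (M + 1) + Lc n k (M + 1))).

Lemma Cst_ge1 n k cb M : 0 <= M -> 1 <= Cst n k cb (M + 1).
Proof.
  intros HM. unfold Cst. pose proof (pos_INR n). pose proof (Rabs_pos (k / INR n)). pose proof (Rabs_pos cb).
  assert (0 <= INR n * (M + 1) * (M + 1)) by (apply Rmult_le_pos; [apply Rmult_le_pos|]; lra).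
  assert (0 <= Rabs (k / INR n) * (M + 1 + Rabs cb)) by (apply Rmult_le_pos; lra).
  nra.
Qed.

Lemma Lc_ge1 n k M : 0 <= M -> 1 <= Lc n k (M + 1).
Proof.
  intros HM. unfold Lc. pose proof (pos_INR n). pose proof (Rabs_pos (k / INR n)).
  assert (0 <= INR n * (M + 1)) by (apply Rmult_le_pos; lra). nra.
Qed.

Lemma dl_pos n k cb M : 0 <= M -> 0 < dl n k cb M.
Proof.
  intros HM. unfold dl. pose proof (Cst_ge1 n k cb M HM). pose proof (Lc_ge1 n k M HM).
  apply Rinv_0_lt_compat. lra.
Qed.

Lemma picard n k cb M t1 (y1 : nat -> R) : 0 <= M ->
  (forall j, (j <= n)%nat -> Rabs (y1 j) <= M) ->
  exists psi : nat -> R -> R,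
   (forall j, (j <= n)%nat -> psi j t1 = y1 j) /\
   (forall j t, (j <= n)%nat -> t1 <= t <= t1 + dl n k cb M ->
      is_derive (psi j) t (Fv n k cb j (fun i => psi i t))).
Proof.
  intros HM Hy1.
  set (d := dl n k cb M).
  set (C := Cst n k cb (M + 1)). set (L := Lc n k (M + 1)).
  assert (HC1 : 1 <= C) by apply Cst_ge1, HM.
  assert (HL1 : 1 <= L) by apply Lc_ge1, HM.
  assert (Hd : 0 < d) by apply dl_pos, HM.
  assert (Hdv : d = / (2 * (C + L))) by reflexivity.
  assert (HdC : d * C <= 1).
  { rewrite Hdv. apply Rmult_le_reg_l with (2 * (C + L)); [lra|].
    field_simplify; lra. }
  assert (HdL : d * L <= 1/2).
  { rewrite Hdv. apply Rmult_le_reg_l with (2 * (C + L)); [lra|].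
    field_simplify; lra. }
  pose proof (pic_inv n k cb t1 d y1 M HM Hd HdC Hy1) as Hinv.
  pose proof (pic_lim n k cb t1 d y1 M HM Hd HdC HdL Hy1) as Hlim.
  pose proof (pic_tail n k cb t1 d y1 M HM Hd HdC HdL Hy1) as Htail.
  set (phi := fun j t => real (Lim_seq (fun m => pic n k cb t1 d y1 m j t))).
  assert (Hclose : forall m j t, (j <= n)%nat -> Rabs (phi j t - pic n k cb t1 d y1 m j t) <= 2 * (1/2)^m).
  { intros m j t Hj. apply (lim_bound _ _ _ _ m (Hlim j t Hj)).
    intros p Hp. replace p with (m + (p - m))%nat by lia.
    eapply Rle_trans. apply Htail; auto. pose proof (half_pos (m + (p - m))). lra. }
  assert (Hpbox : forall j t, (j <= n)%nat -> Rabs (phi j t - y1 j) <= 1).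
  { intros j t Hj. apply (lim_bound _ _ _ _ O (Hlim j t Hj)). intros p _. apply Hinv; auto. }
  assert (Hbox : forall i s, (i <= n)%nat -> Rabs (phi i s) <= M + 1).
  { intros i s Hi. specialize (Hpbox i s Hi). specialize (Hy1 i Hi).
    replace (phi i s) with ((phi i s - y1 i) + y1 i) by ring.
    eapply Rle_trans. apply Rabs_triang. lra. }
  assert (Hplip : forall j t t', (j <= n)%nat -> Rabs (phi j t - phi j t') <= C * Rabs (t - t')).
  { intros j t t' Hj.
    assert (Hl2 := is_lim_seq_minus' _ _ _ _ (Hlim j t Hj) (Hlim j t' Hj)).
    replace (phi j t - phi j t') with (phi j t - phi j t' - 0) by ring.
    apply (lim_bound _ _ _ _ O Hl2). intros p _. rewrite Rminus_0_r. apply Hinv; auto. }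
  assert (HGc : forall j, (j <= n)%nat -> forall x, continuous (fun s => Fv n k cb j (fun i => phi i s)) x).
  { intros j Hj. apply (comp_cont n k cb (M+1) C); auto; lra. }
  assert (Hbox_m : forall m i s, (i <= n)%nat -> Rabs (pic n k cb t1 d y1 m i s) <= M + 1).
  { intros m i s Hi. destruct (Hinv m) as [IHb _]. specialize (IHb i s Hi). specialize (Hy1 i Hi).
    replace (pic n k cb t1 d y1 m i s) with ((pic n k cb t1 d y1 m i s - y1 i) + y1 i) by ring.
    eapply Rle_trans. apply Rabs_triang. lra. }
  assert (Hc_m : forall m j, (j <= n)%nat -> forall x, continuous (fun s => Fv n k cb j (fun i => pic n k cb t1 d y1 m i s)) x).
  { intros m j Hj. apply (comp_cont n k cb (M+1) C); auto; try lra. apply Hinv. }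
  set (psi := fun j t => y1 j + RInt (fun s => Fv n k cb j (fun i => phi i s)) t1 t).
  assert (Hint : forall j t, (j <= n)%nat -> t1 <= t <= t1 + d -> phi j t = psi j t).
  { intros j t Hj Ht. apply Rminus_diag_uniq. apply (zero_geom _ 2). intros m.
    set (G := fun s => Fv n k cb j (fun i => phi i s)).
    set (g := fun s => Fv n k cb j (fun i => pic n k cb t1 d y1 m i s)).
    assert (Hp : pic n k cb t1 d y1 (S m) j t = y1 j + RInt g t1 t).
    { rewrite pic_S. rewrite clamp_id by lra. reflexivity. }
    assert (Heq : RInt (fun s => g s - G s) t1 t = RInt g t1 t - RInt G t1 t).
    { apply (RInt_minus (V:=R_CompleteNormedModule)); apply cont_ex_RInt; [apply Hc_m| apply HGc]; auto. }
    assert (Hdec : phi j t - psi j t = (phi j t - pic n k cb t1 d y1 (S m) j t) + RInt (fun s => g s - G s) t1 t).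
    { rewrite Heq, Hp. unfold psi. fold G. ring. }
    rewrite Hdec. eapply Rle_trans. apply Rabs_triang.
    assert (H1 := Hclose (S m) j t Hj).
    assert (H2 : Rabs (RInt (fun s => g s - G s) t1 t) <= (L * (2 * (1/2)^m)) * Rabs (t - t1)).
    { apply RInt_abs_bound.
      - intros x. apply cont_minus_R; [apply Hc_m| apply HGc]; auto.
      - intros x. unfold g, G. apply Fv_lip; [lra | auto | intros; apply Hbox_m; auto | intros; apply Hbox; auto |].
        intros i Hi. rewrite Rabs_minus_sym. apply Hclose; auto. }
    rewrite (Rabs_right (t - t1)) in H2 by lra.
    pose proof (half_pos m).
    assert (L * (2 * (1/2)^m) * (t - t1) <= (1/2)^m).
    { apply Rle_trans with (L * (2 * (1/2)^m) * d). apply Rmult_le_compat_l; [|lra].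
      apply Rmult_le_pos; lra. nra. }
    change ((1/2)^(S m)) with (1/2 * (1/2)^m) in H1. lra. }
  exists psi. split.
  - intros j Hj. unfold psi. rewrite RInt_point. unfold zero; simpl. ring.
  - intros j t Hj Ht.
    assert (HD : is_derive (psi j) t (Fv n k cb j (fun i => phi i t))).
    { unfold psi. 
      assert (HR := RInt_der (fun s => Fv n k cb j (fun i => phi i s)) t1 (HGc j Hj) t).
      apply (is_derive_plus (fun _ => y1 j) _ t 0 _ (is_derive_const (y1 j) t)) in HR.
      unfold plus in HR; simpl in HR. rewrite Rplus_0_l in HR. exact HR. }
    rewrite (Fv_ext n k cb j (fun i => psi i t) (fun i => phi i t)); auto.
    intros i Hi. symmetry. apply Hint; auto.
Qed.

Lemma der_mult (f g : R -> R) x df dg : is_derive f x df -> is_derive g x dg ->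
  is_derive (fun t => f t * g t) x (df * g x + f x * dg).
Proof.
  intros Hf Hg. apply (is_derive_mult (K:=R_AbsRing) f g x df dg Hf Hg).
  intros; apply Rmult_comm.
Qed.

Lemma der_exp (g : R -> R) x dg : is_derive g x dg -> is_derive (fun t => exp (g t)) x (dg * exp (g x)).
Proof.
  intros Hg. apply (is_derive_comp (K:=R_AbsRing) (V:=R_NormedModule) exp g x (exp (g x)) dg); auto.
  apply is_derive_exp.
Qed.

Lemma const_der (f : R -> R) a b : a <= b -> (forall x, a <= x <= b -> is_derive f x 0) -> f a = f b.
Proof.
  intros Hab H. apply Rle_antisym.
  - apply (mono_der f (fun _ => 0)); auto. intros; lra.
  - assert (- f a <= - f b); [|lra].
    apply (mono_der (fun x => - f x) (fun _ => 0)); auto.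
    + intros x Hx. replace 0 with (opp 0) by (unfold opp; simpl; ring).
      apply (is_derive_opp (K:=R_AbsRing) (V:=R_NormedModule)). apply H; auto.
    + intros; lra.
Qed.

Lemma near0 (g : R -> R) g0 : filterlim g (at_right 0) (locally g0) ->
  forall eps, 0 < eps -> exists dl, 0 < dl /\ forall t, 0 < t < dl -> Rabs (g t - g0) < eps.
Proof.
  intros H eps He.
  destruct (H _ (locally_ball g0 (mkposreal _ He))) as [dl Hd].
  exists dl. split. apply cond_pos. intros t Ht.
  apply Hd. unfold ball; simpl. unfold AbsRing_ball; simpl. unfold abs, minus, plus, opp; simpl.
  rewrite Ropp_0, Rplus_0_r, Rabs_right by lra. lra. lra.
Qed.

Lemma bnd0 (g : R -> R) g0 b : filterlim g (at_right 0) (locally g0) ->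
  (forall t, 0 < t <= b -> continuity_pt g t) ->
  exists K, forall t, 0 < t <= b -> Rabs (g t) <= K.
Proof.
  intros Hl Hc. destruct (near0 g g0 Hl 1 ltac:(lra)) as [dl [Hdl Hn]].
  destruct (Rlt_dec b (dl / 2)).
  - exists (Rabs g0 + 1). intros t Ht. specialize (Hn t ltac:(lra)).
    replace (g t) with ((g t - g0) + g0) by ring. eapply Rle_trans. apply Rabs_triang. lra.
  - destruct (continuity_ab_maj g (dl/2) b ltac:(lra)) as [Mx [HMx HMxr]].
    { intros c Hc'. apply Hc. lra. }
    destruct (continuity_ab_min g (dl/2) b ltac:(lra)) as [mx [Hmx Hmxr]].
    { intros c Hc'. apply Hc. lra. }
    exists (Rabs g0 + 1 + Rabs (g Mx) + Rabs (g mx)). intros t Ht.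
    pose proof (Rabs_pos (g Mx)). pose proof (Rabs_pos (g mx)). pose proof (Rabs_pos g0).
    destruct (Rlt_dec t dl).
    + specialize (Hn t ltac:(lra)).
      replace (g t) with ((g t - g0) + g0) by ring. eapply Rle_trans. apply Rabs_triang. lra.
    + specialize (HMx t ltac:(lra)). specialize (Hmx t ltac:(lra)).
      pose proof (Rle_abs (g Mx)). pose proof (Rle_abs (- g mx)). rewrite Rabs_Ropp in *.
      apply Rabs_le. lra.
Qed.

Lemma RInt_der_loc (a : R -> R) T s t : 0 < s < T -> 0 < t < T ->
  (forall u, 0 < u < T -> continuous a u) ->
  is_derive (fun u => RInt a s u) t (a t).
Proof.
  intros Hs Ht Hc. apply is_derive_RInt with (a := s).
  - assert (He : 0 < Rmin t (T - t)) by (apply Rmin_pos; lra).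
    exists (mkposreal _ He). intros b Hb. simpl in Hb.
    unfold ball in Hb; simpl in Hb; unfold AbsRing_ball, abs, minus, plus, opp in Hb; simpl in Hb.
    apply Rabs_lt_between' in Hb. pose proof (Rmin_l t (T - t)). pose proof (Rmin_r t (T - t)).
    apply RInt_correct. apply (ex_RInt_continuous (V:=R_CompleteNormedModule)).
    intros z Hz. apply Hc. split.
    + eapply Rlt_le_trans; [|apply Hz]. apply Rmin_glb_lt; lra.
    + eapply Rle_lt_trans; [apply Hz|]. apply Rmax_lub_lt; lra.
  - apply Hc; auto.
Qed.

Lemma exp_ident (f a : R -> R) T s :
  (forall t, 0 < t < T -> is_derive f t (- a t * f t)) ->
  (forall t, 0 < t < T -> continuous a t) -> 0 < s < T ->
  forall t, 0 < t < T -> f t * exp (RInt a s t) = f s.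
Proof.
  intros Hd Hc Hs.
  set (h := fun u => f u * exp (RInt a s u)).
  assert (Hh : forall u, 0 < u < T -> is_derive h u 0).
  { intros u Hu. unfold h.
    assert (H1 := der_exp _ _ _ (RInt_der_loc a T s u Hs Hu Hc)).
    assert (H2 := der_mult _ _ _ _ _ (Hd u Hu) H1).
    replace 0 with (- a u * f u * exp (RInt a s u) + f u * (a u * exp (RInt a s u))) by ring.
    exact H2. }
  assert (Hss : h s = f s).
  { unfold h. rewrite RInt_point. unfold zero; simpl. rewrite exp_0. ring. }
  intros t Ht. fold (h t). rewrite <- Hss.
  destruct (Rle_dec t s).
  - apply const_der; auto. intros; apply Hh; lra.
  - symmetry. apply const_der; [lra|]. intros; apply Hh; lra.
Qed.

Definition Yv (lam : nat -> R -> R) (rho : R -> R) (j : nat) (t : R) : R :=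
  match j with O => rho t | S _ => lam j t end.

Lemma Yv_der n k cb rho0 lam0 tB lam rho : is_sol_on n k cb rho0 lam0 tB lam rho ->
  forall j t, (j <= n)%nat -> 0 < t < tB ->
  is_derive (Yv lam rho j) t (Fv n k cb j (fun i => Yv lam rho i t)).
Proof.
  intros [_ [_ [Hd _]]] j t Hj Ht. destruct (Hd t Ht) as [Hl Hr].
  destruct j as [|j].
  - simpl. unfold lam_sum in Hr.
    rewrite (sum_n_m_ext_loc (fun i => Yv lam rho i t) (fun i => lam i t)).
    + exact Hr.
    + intros i Hi. destruct i; [lia| reflexivity].
  - simpl. apply Hl. lia.
Qed.

Lemma sum_cont (f : nat -> R -> R) a b x : (forall i, (a <= i <= b)%nat -> continuous (f i) x) ->
  continuous (fun t => sum_n_m (fun i => f i t) a b) x.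
Proof.
  induction b as [|b IH]; intros H.
  - destruct a.
    + apply (continuous_ext (f 0%nat)). intros; rewrite sum_n_n; reflexivity. apply H; lia.
    + apply (continuous_ext (fun _ : R => 0)). intros; rewrite sum_n_m_zero by lia; reflexivity.
      apply continuous_const.
  - destruct (Compare_dec.le_lt_dec a (S b)).
    + apply (continuous_ext (fun t => plus (sum_n_m (fun i => f i t) a b) (f (S b) t))).
      intros; rewrite sum_n_Sm by lia; reflexivity.
      apply (continuous_plus (V:=R_NormedModule)). apply IH. intros; apply H; lia. apply H; lia.
    + apply (continuous_ext (fun _ : R => 0)). intros; rewrite sum_n_m_zero by lia; reflexivity.
      apply continuous_const.
Qed.

Lemma der_cont (f : R -> R) (x l : R) : is_derive f x l -> continuous f x.
Proof. intros H. apply continuity_pt_filterlim. eapply der_cont_pt; eauto. Qed.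

Lemma rho_pos n k cb rho0 lam0 tB lam rho : 0 < rho0 -> 0 < tB ->
  is_sol_on n k cb rho0 lam0 tB lam rho -> forall t, 0 < t < tB -> 0 < rho t.
Proof.
  intros Hr0 HtB Hs.
  pose proof Hs as [H0 [_ [Hd [Hrl _]]]].
  rewrite H0 in Hrl.
  destruct (near0 rho rho0 Hrl (rho0/2) ltac:(lra)) as [dl [Hdl Hn]].
  set (s := Rmin (dl/2) (tB/2)).
  assert (Hs0 : 0 < s < tB) by (unfold s; split; [apply Rmin_pos; lra| eapply Rle_lt_trans; [apply Rmin_r| lra]]).
  assert (Hsp : 0 < rho s).
  { assert (s < dl) by (unfold s; eapply Rle_lt_trans; [apply Rmin_l| lra]).
    specialize (Hn s ltac:(lra)). apply Rabs_lt_between' in Hn. lra. }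
  intros t Ht.
  assert (E : rho t * exp (RInt (fun u => lam_sum n lam u) s t) = rho s).
  { apply (exp_ident rho (fun u => lam_sum n lam u) tB s); auto.
    - intros u Hu. destruct (Hd u Hu) as [_ Hr]. replace (- lam_sum n lam u * rho u) with (- rho u * lam_sum n lam u) by ring. exact Hr.
    - intros u Hu. unfold lam_sum. apply sum_cont. intros i Hi. destruct (Hd u Hu) as [Hl _].
      eapply der_cont. apply Hl. lia. }
  pose proof (exp_pos (RInt (fun u => lam_sum n lam u) s t)). nra.
Qed.

Lemma lam0_chain n (lam0 : nat -> R) : (forall i, (1 <= i < n)%nat -> lam0 i <= lam0 (S i)) ->
  forall i, (1 <= i <= n)%nat -> lam0 1%nat <= lam0 i.
Proof.
  intros H i. induction i as [|i IH]; intros Hi; [lia|].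
  destruct (Nat.eq_dec i 0) as [->|Hi0]; [lra|].
  specialize (IH ltac:(lia)). specialize (H i ltac:(lia)). lra.
Qed.

Lemma der_minus_R (f g : R -> R) x df dg : is_derive f x df -> is_derive g x dg ->
  is_derive (fun t => f t - g t) x (df - dg).
Proof. intros Hf Hg. apply (is_derive_minus (K:=R_AbsRing) (V:=R_NormedModule) f g x df dg Hf Hg). Qed.

Lemma order n k cb rho0 lam0 tB lam rho :
  (forall i, (1 <= i < n)%nat -> lam0 i <= lam0 (S i)) ->
  is_sol_on n k cb rho0 lam0 tB lam rho ->
  forall i t, (1 <= i <= n)%nat -> 0 < t < tB -> lam 1%nat t <= lam i t.
Proof.
  intros Hch Hs i ts Hi Hts.
  pose proof Hs as [_ [Hl0 [Hd [_ Hll]]]].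
  assert (Hn1 : (1 <= 1 <= n)%nat) by lia.
  destruct (Rle_dec (lam 1%nat ts) (lam i ts)) as [|Hc]; auto. exfalso.
  set (d := fun t => lam i t - lam 1%nat t).
  set (a := fun t => lam i t + lam 1%nat t).
  assert (Hca : forall u, 0 < u < tB -> continuous a u).
  { intros u Hu. destruct (Hd u Hu) as [Hl _]. unfold a.
    apply (continuous_plus (V:=R_NormedModule) (fun t => lam i t) (fun t => lam 1%nat t)); eapply der_cont; apply Hl; lia. }
  assert (Hid : forall t, 0 < t < tB -> d t * exp (RInt a ts t) = d ts).
  { apply exp_ident; auto.
    intros u Hu. destruct (Hd u Hu) as [Hl _]. unfold d.
    eapply is_derive_ext; [intros; reflexivity|].
    replace (- a u * (lam i u - lam 1%nat u)) with
      ((- lam i u ^ 2 + k / INR n * (rho u - cb)) - (- lam 1%nat u ^ 2 + k / INR n * (rho u - cb))) by (unfold a; ring).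
    apply der_minus_R; apply Hl; lia. }
  assert (Hdts : d ts < 0) by (unfold d; lra).
  assert (Hli := Hll i Hi). assert (Hl1 := Hll 1%nat Hn1).
  rewrite (Hl0 i Hi) in Hli. rewrite (Hl0 1%nat Hn1) in Hl1.
  assert (Hcp : forall j, (1 <= j <= n)%nat -> forall t, 0 < t <= ts -> continuity_pt (lam j) t).
  { intros j Hj t Ht. destruct (Hd t ltac:(lra)) as [Hl _]. eapply der_cont_pt. apply Hl; auto. }
  destruct (bnd0 _ _ ts Hli (Hcp i Hi)) as [K1 HK1].
  destruct (bnd0 _ _ ts Hl1 (Hcp 1%nat Hn1)) as [K2 HK2].
  set (W := ts * (K1 + K2)).
  assert (HX : forall t, 0 < t < ts -> RInt a ts t <= W).
  { intros t Ht.
    rewrite <- (opp_RInt_swap a t ts).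
    2:{ apply (ex_RInt_continuous (V:=R_CompleteNormedModule)). intros z Hz.
        rewrite Rmin_left, Rmax_right in Hz by lra. apply Hca; lra. }
    unfold opp; simpl.
    assert (Rabs (RInt a t ts) <= (ts - t) * (K1 + K2)).
    { apply abs_RInt_le_const; [lra| |].
      - apply (ex_RInt_continuous (V:=R_CompleteNormedModule)). intros z Hz.
        rewrite Rmin_left, Rmax_right in Hz by lra. apply Hca; lra.
      - intros z Hz. unfold a. eapply Rle_trans. apply Rabs_triang.
        pose proof (HK1 z ltac:(lra)). pose proof (HK2 z ltac:(lra)). lra. }
    assert (0 <= K1 + K2).
    { pose proof (HK1 ts ltac:(lra)). pose proof (HK2 ts ltac:(lra)).
      pose proof (Rabs_pos (lam i ts)). pose proof (Rabs_pos (lam 1%nat ts)). lra. }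
    apply Rabs_le_between in H. unfold W. nra. }
  set (c0 := d ts / exp W).
  assert (Hc0 : c0 < 0).
  { unfold c0. unfold Rdiv. pose proof (exp_pos W). pose proof (Rinv_0_lt_compat _ H). nra. }
  assert (Hdt : forall t, 0 < t < ts -> d t <= c0).
  { intros t Ht. specialize (Hid t ltac:(lra)).
    assert (E : d t = d ts / exp (RInt a ts t)).
    { rewrite <- Hid. field. apply Rgt_not_eq, exp_pos. }
    rewrite E. unfold c0. unfold Rdiv.
    assert (exp (RInt a ts t) <= exp W).
    { destruct (Rle_lt_or_eq_dec _ _ (HX t Ht)) as [Hlt|Heq]. apply Rlt_le, exp_increasing; auto. rewrite Heq; lra. }
    pose proof (exp_pos (RInt a ts t)). pose proof (exp_pos W).
    apply Rmult_le_compat_neg_l. lra.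
    apply Rinv_le_contravar; auto. }
  destruct (near0 _ _ Hli (- c0 / 2) ltac:(lra)) as [e1 [He1 Hn1']].
  destruct (near0 _ _ Hl1 (- c0 / 2) ltac:(lra)) as [e2 [He2 Hn2']].
  set (t := Rmin (Rmin e1 e2) ts / 2).
  assert (Ht0 : 0 < Rmin (Rmin e1 e2) ts) by (repeat apply Rmin_pos; lra).
  assert (Htl : Rmin (Rmin e1 e2) ts <= e1 /\ Rmin (Rmin e1 e2) ts <= e2 /\ Rmin (Rmin e1 e2) ts <= ts).
  { split; [|split]; [eapply Rle_trans; [apply Rmin_l| apply Rmin_l] | eapply Rle_trans; [apply Rmin_l| apply Rmin_r] | apply Rmin_r]. }
  specialize (Hn1' t ltac:(unfold t; lra)). specialize (Hn2' t ltac:(unfold t; lra)).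
  specialize (Hdt t ltac:(unfold t; lra)).
  apply Rabs_lt_between' in Hn1'. apply Rabs_lt_between' in Hn2'.
  pose proof (lam0_chain n lam0 Hch i Hi).
  unfold d in Hdt. lra.
Qed.

Lemma sum_lb (u : nat -> R) b m : (forall i, (1 <= i <= m)%nat -> b <= u i) ->
  INR m * b <= sum_n_m u 1 m.
Proof.
  induction m as [|m IH]; intros H.
  - rewrite sum_n_m_zero by lia. unfold zero; simpl. lra.
  - rewrite sum_n_Sm by lia. rewrite S_INR. unfold plus; simpl.
    specialize (IH ltac:(intros; apply H; lia)). specialize (H (S m) ltac:(lia)). lra.
Qed.

Lemma sum_ge_term (u : nat -> R) m j : (forall i, (1 <= i <= m)%nat -> 0 <= u i) ->
  (1 <= j <= m)%nat -> u j <= sum_n_m u 1 m.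
Proof.
  induction m as [|m IH]; intros H Hj; [lia|].
  rewrite sum_n_Sm by lia. unfold plus; simpl.
  destruct (Nat.eq_dec j (S m)) as [->|Hne].
  - assert (0 <= sum_n_m u 1 m); [|lra].
    eapply Rle_trans; [|apply (sum_lb u 0 m)]; [rewrite Rmult_0_r; lra|]. intros; apply H; lia.
  - specialize (IH ltac:(intros; apply H; lia) ltac:(lia)). specialize (H (S m) ltac:(lia)). lra.
Qed.

Lemma exp_le x y : x <= y -> exp x <= exp y.
Proof. intros H. destruct (Rle_lt_or_eq_dec _ _ H) as [Hl|Heq]; [apply Rlt_le, exp_increasing; auto| rewrite Heq; lra]. Qed.

Lemma atan_le x y : x <= y -> atan x <= atan y.
Proof. intros H. destruct (Rle_lt_or_eq_dec _ _ H) as [Hl|Heq]; [apply Rlt_le, atan_increasing; auto| rewrite Heq; lra]. Qed.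

Lemma lim_from (f : R -> R) tB :
  (forall M, exists d, 0 < d /\ forall t, tB - d < t < tB -> f t < M) ->
  filterlim f (at_left tB) (Rbar_locally m_infty).
Proof.
  intros H P [M HM]. destruct (H M) as [d [Hd Hf]].
  exists (mkposreal d Hd). intros y Hy Hlt. apply HM. apply Hf.
  unfold ball in Hy; simpl in Hy; unfold AbsRing_ball, abs, minus, plus, opp in Hy; simpl in Hy.
  apply Rabs_lt_between' in Hy. lra.
Qed.

Definition scn n k cb := sqrt (k * cb / INR n).
Definition eta n k cb M0 := (atan (M0 / scn n k cb) + PI / 2) / (2 * scn n k cb).

Lemma scn_pos n k cb : (2 <= n)%nat -> 0 < k -> 0 < cb -> 0 < scn n k cb.
Proof.
  intros Hn Hk Hcb. unfold scn. apply sqrt_lt_R0.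
  assert (0 < INR n) by (apply lt_0_INR; lia).
  apply Rdiv_lt_0_compat; nra.
Qed.

Lemma eta_pos n k cb M0 : (2 <= n)%nat -> 0 < k -> 0 < cb -> 0 < eta n k cb M0.
Proof.
  intros Hn Hk Hcb. unfold eta. pose proof (scn_pos n k cb Hn Hk Hcb).
  pose proof (atan_bound (M0 / scn n k cb)). apply Rdiv_lt_0_compat; lra.
Qed.

Lemma lam1_lb n k cb rho0 lam0 tB lam rho s M0 :
  (2 <= n)%nat -> 0 < k -> 0 < cb -> 0 < rho0 -> 0 < tB ->
  is_sol_on n k cb rho0 lam0 tB lam rho -> 0 < s < tB -> M0 <= lam 1%nat s ->
  tB - s < eta n k cb M0 ->
  exists L1, forall t, s <= t < tB -> L1 <= lam 1%nat t.
Proof.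
  intros Hn Hk Hcb Hr0 HtB Hs Hsr HM0 Heta.
  pose proof Hs as [_ [_ [Hd _]]].
  set (sc := scn n k cb). assert (Hsc : 0 < sc) by (apply scn_pos; auto).
  assert (Hnp : 0 < INR n) by (apply lt_0_INR; lia).
  assert (Hsc2 : sc * sc = k * cb / INR n).
  { unfold sc, scn. apply sqrt_sqrt. apply Rlt_le, Rdiv_lt_0_compat; nra. }
  set (thA := atan (M0 / sc)).
  set (th0 := (thA - PI / 2) / 2).
  pose proof (atan_bound (M0 / sc)). fold thA in H. pose proof PI_RGT_0.
  exists (sc * tan th0). intros t Ht.
  set (f := fun u => atan (/ sc * lam 1%nat u) + sc * u).
  assert (Hmono : f s <= f t).
  { apply (mono_der f (fun u => / sc * (- lam 1%nat u ^ 2 + k / INR n * (rho u - cb)) * / (1 + (/ sc * lam 1%nat u) ^ 2) + sc)); [lra| |].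
    - intros u Hu. destruct (Hd u ltac:(lra)) as [Hl _].
      unfold f. apply (is_derive_plus (K:=R_AbsRing) (V:=R_NormedModule)).
      + apply (is_derive_comp (K:=R_AbsRing) (V:=R_NormedModule) atan (fun u => / sc * lam 1%nat u)).
        * apply is_derive_Reals. apply derivable_pt_lim_atan.
        * apply is_derive_scal. apply Hl. lia.
      + replace sc with (sc * 1) at 2 by ring. apply is_derive_scal.
        apply (is_derive_id (K:=R_AbsRing)).
    - intros u Hu. set (x := lam 1%nat u).
      assert (HD : 0 < 1 + (/ sc * x) ^ 2) by (pose proof (pow2_ge_0 (/ sc * x)); lra).
      assert (Hru : 0 < rho u) by (apply (rho_pos n k cb rho0 lam0 tB lam rho); auto; lra).
      assert (E : / sc * (- x ^ 2 + k / INR n * (rho u - cb)) * / (1 + (/ sc * x) ^ 2) + sc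
                = / sc * (k / INR n * rho u) * / (1 + (/ sc * x) ^ 2)).
      { assert (E0 : k / INR n * (rho u - cb) = k / INR n * rho u - sc * sc) by (rewrite Hsc2; field; lra).
        rewrite E0. field. pose proof (pow2_ge_0 x). repeat split; try lra. nra. }
      rewrite E. apply Rmult_le_pos; [apply Rmult_le_pos|].
      + apply Rlt_le, Rinv_0_lt_compat; auto.
      + apply Rmult_le_pos; [apply Rlt_le, Rdiv_lt_0_compat; auto| lra].
      + apply Rlt_le, Rinv_0_lt_compat; auto. }
  unfold f in Hmono.
  assert (HA : thA <= atan (/ sc * lam 1%nat s)).
  { unfold thA. apply atan_le. unfold Rdiv. rewrite Rmult_comm. apply Rmult_le_compat_l; [apply Rlt_le, Rinv_0_lt_compat|]; auto. }
  assert (Heta' : sc * (tB - s) < (thA + PI / 2) / 2).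
  { unfold eta in Heta. fold sc thA in Heta.
    apply (Rmult_lt_compat_l sc) in Heta; auto.
    replace (sc * ((thA + PI / 2) / (2 * sc))) with ((thA + PI / 2) / 2) in Heta by (field; lra). exact Heta. }
  assert (Hth : th0 < atan (/ sc * lam 1%nat t)).
  { unfold th0. nra. }
  apply Rnot_lt_le. intros Hlt.
  assert (/ sc * lam 1%nat t < tan th0).
  { apply (Rmult_lt_compat_l (/ sc)) in Hlt; [|apply Rinv_0_lt_compat; auto].
    replace (/ sc * (sc * tan th0)) with (tan th0) in Hlt by (field; lra). exact Hlt. }
  apply atan_increasing in H1. rewrite atan_tan in H1 by (unfold th0; lra). lra.
Qed.

Lemma bounded_near n k cb rho0 lam0 tB lam rho s L1 :
  (2 <= n)%nat -> 0 < k -> 0 < cb -> 0 < rho0 -> 0 < tB ->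
  (forall i, (1 <= i < n)%nat -> lam0 i <= lam0 (S i)) ->
  is_sol_on n k cb rho0 lam0 tB lam rho -> 0 < s < tB ->
  (forall t, s <= t < tB -> L1 <= lam 1%nat t) ->
  exists M, 0 <= M /\ forall j t, (j <= n)%nat -> s <= t < tB -> Rabs (Yv lam rho j t) <= M.
Proof.
  intros Hn Hk Hcb Hr0 HtB Hch Hs Hsr HL1.
  pose proof Hs as [_ [_ [Hd _]]].
  assert (Hnp : 0 < INR n) by (apply lt_0_INR; lia).
  assert (Hkn : 0 < k / INR n) by (apply Rdiv_lt_0_compat; auto).
  assert (Hlow : forall i t, (1 <= i <= n)%nat -> s <= t < tB -> L1 <= lam i t).
  { intros i t Hi Ht. apply Rle_trans with (lam 1%nat t); [apply HL1; auto|]. apply (order n k cb rho0 lam0 tB lam rho); auto. lra. }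
  set (Lm := Rmin L1 0).
  assert (HLm : Lm <= 0 /\ Lm <= L1) by (unfold Lm; split; [apply Rmin_r| apply Rmin_l]).
  set (P := rho s * exp (- (INR n * Lm) * tB)).
  assert (Hrpos : forall t, 0 < t < tB -> 0 < rho t) by (apply (rho_pos n k cb rho0 lam0 tB lam rho); auto).
  assert (HP : forall t, s <= t < tB -> rho t <= P).
  { intros t Ht.
    set (h := fun u => - (rho u * exp (INR n * Lm * u))).
    assert (Hh : h s <= h t).
    { apply (mono_der h (fun u => - ((- rho u * lam_sum n lam u) * exp (INR n * Lm * u) + rho u * (INR n * Lm * exp (INR n * Lm * u))))); [lra| |].
      - intros u Hu. destruct (Hd u ltac:(lra)) as [_ Hr]. unfold h.
        replace (- ((- rho u * lam_sum n lam u) * exp (INR n * Lm * u) + rho u * (INR n * Lm * exp (INR n * Lm * u))))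
          with (opp ((- rho u * lam_sum n lam u) * exp (INR n * Lm * u) + rho u * (INR n * Lm * exp (INR n * Lm * u)))) by reflexivity.
        apply (is_derive_opp (K:=R_AbsRing) (V:=R_NormedModule)).
        apply (der_mult rho (fun v => exp (INR n * Lm * v))); auto.
        apply (der_exp (fun v => INR n * Lm * v)).
        auto_derive; auto; ring.
      - intros u Hu.
        assert (Hs1 : INR n * Lm <= lam_sum n lam u).
        { unfold lam_sum. apply sum_lb. intros i Hi. pose proof (Hlow i u Hi ltac:(lra)). lra. }
        pose proof (Hrpos u ltac:(lra)). pose proof (exp_pos (INR n * Lm * u)).
        assert (0 <= rho u * exp (INR n * Lm * u) * (lam_sum n lam u - INR n * Lm)).
        { apply Rmult_le_pos; [apply Rmult_le_pos|]; lra. }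
        nra. }
    unfold h in Hh.
    assert (E : rho t <= rho s * exp (INR n * Lm * s) * exp (- (INR n * Lm * t))).
    { pose proof (exp_pos (INR n * Lm * t)).
      replace (rho t) with (rho t * exp (INR n * Lm * t) * exp (- (INR n * Lm * t))) by (rewrite Rmult_assoc, <- exp_plus, Rplus_opp_r, exp_0; ring).
      apply Rmult_le_compat_r. apply Rlt_le, exp_pos. lra. }
    eapply Rle_trans. apply E. rewrite Rmult_assoc, <- exp_plus. unfold P.
    apply Rmult_le_compat_l. apply Rlt_le, Hrpos; lra.
    apply exp_le.
    assert (0 <= - (INR n * Lm)) by nra.
    assert (INR n * Lm * (s - t + tB) <= 0) by (apply Rmult_le_0_r; [nra| lra]). nra. }
  set (S1 := sum_n_m (fun i => Rabs (lam i s)) 1 n).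
  assert (Hup : forall i t, (1 <= i <= n)%nat -> s <= t < tB -> lam i t <= S1 + k / INR n * P * tB).
  { intros i t Hi Ht.
    set (h := fun u => - (lam i u - k / INR n * P * u)).
    assert (Hh : h s <= h t).
    { apply (mono_der h (fun u => - ((- lam i u ^ 2 + k / INR n * (rho u - cb)) - k / INR n * P))); [lra| |].
      - intros u Hu. destruct (Hd u ltac:(lra)) as [Hl _]. unfold h.
        replace (- ((- lam i u ^ 2 + k / INR n * (rho u - cb)) - k / INR n * P))
          with (opp ((- lam i u ^ 2 + k / INR n * (rho u - cb)) - k / INR n * P)) by reflexivity.
        apply (is_derive_opp (K:=R_AbsRing) (V:=R_NormedModule)).
        apply der_minus_R. apply Hl; auto.
        auto_derive; auto; ring.
      - intros u Hu. pose proof (HP u ltac:(lra)). pose proof (pow2_ge_0 (lam i u)).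
        assert (k / INR n * (rho u - cb) <= k / INR n * P) by (apply Rmult_le_compat_l; lra). lra. }
    unfold h in Hh.
    assert (lam i s <= S1).
    { eapply Rle_trans. apply Rle_abs. apply (sum_ge_term (fun i => Rabs (lam i s))); auto.
      intros; apply Rabs_pos. }
    assert (0 <= P) by (pose proof (HP s ltac:(lra)); pose proof (Hrpos s Hsr); lra).
    assert (k / INR n * P * (t - s) <= k / INR n * P * tB).
    { apply Rmult_le_compat_l; [apply Rmult_le_pos|]; lra. }
    lra. }
  exists (Rabs L1 + Rabs (S1 + k / INR n * P * tB) + Rabs P).
  pose proof (Rabs_pos L1). pose proof (Rabs_pos (S1 + k / INR n * P * tB)). pose proof (Rabs_pos P).
  split; [lra|]. intros j t Hj Ht. destruct j as [|j].
  - simpl. pose proof (Hrpos t ltac:(lra)). pose proof (HP t Ht).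
    rewrite Rabs_right by lra. pose proof (Rle_abs P). lra.
  - simpl. pose proof (Hlow (S j) t ltac:(lia) Ht). pose proof (Hup (S j) t ltac:(lia) Ht).
    pose proof (Rle_abs (S1 + k / INR n * P * tB)). pose proof (Rle_abs (- L1)). rewrite Rabs_Ropp in *.
    apply Rabs_le. lra.
Qed.

Lemma loc_lt (t t1 : R) (P : R -> Prop) : t < t1 -> (forall u, u < t1 -> P u) -> locally t P.
Proof.
  intros Ht H. assert (He : 0 < t1 - t) by lra. exists (mkposreal _ He). intros u Hu.
  unfold ball in Hu; simpl in Hu; unfold AbsRing_ball, abs, minus, plus, opp in Hu; simpl in Hu.
  apply Rabs_lt_between' in Hu. apply H. lra.
Qed.

Lemma loc_gt (t t1 : R) (P : R -> Prop) : t1 < t -> (forall u, t1 < u -> P u) -> locally t P.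
Proof.
  intros Ht H. assert (He : 0 < t - t1) by lra. exists (mkposreal _ He). intros u Hu.
  unfold ball in Hu; simpl in Hu; unfold AbsRing_ball, abs, minus, plus, opp in Hu; simpl in Hu.
  apply Rabs_lt_between' in Hu. apply H. lra.
Qed.

Lemma right0_lt (t1 : R) (P : R -> Prop) : 0 < t1 -> (forall u, 0 < u < t1 -> P u) -> at_right 0 P.
Proof.
  intros Ht H. exists (mkposreal _ Ht). intros u Hu Hp.
  unfold ball in Hu; simpl in Hu; unfold AbsRing_ball, abs, minus, plus, opp in Hu; simpl in Hu.
  apply Rabs_lt_between' in Hu. apply H. lra.
Qed.

Theorem proposition2p3 (n : nat) (k cb rho0 : R) (lam0 : nat -> R)
  (lam : nat -> R -> R) (rho : R -> R) (tB : R) :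
  (2 <= n)%nat -> 0 < k -> 0 < cb -> 0 < rho0 ->
  (forall i, (1 <= i < n)%nat -> lam0 i <= lam0 (S i)) ->
  0 < tB ->
  is_sol_on n k cb rho0 lam0 tB lam rho ->
  (* maximality of [0,tB): no solution exists on any longer interval [0,T) *)
  (forall T (lam' : nat -> R -> R) (rho' : R -> R),
      tB < T -> ~ is_sol_on n k cb rho0 lam0 T lam' rho') ->
  exists J1 J2 : nat,
    (1 <= J1)%nat /\ (J1 <= J2)%nat /\ (J2 <= n)%nat /\
    (forall i, (1 <= i <= J1)%nat ->
       filterlim (lam i) (at_left tB) (Rbar_locally m_infty)) /\
    (forall i, (J2 < i <= n)%nat ->
       filterlim (lam i) (at_left tB) (Rbar_locally p_infty)).
Proof.
  intros Hn Hk Hcb Hr0 Hch HtB Hs Hmax.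
  assert (Hlim : filterlim (lam 1%nat) (at_left tB) (Rbar_locally m_infty)).
  { apply lim_from. intros M0. apply NNPP. intros Hno.
    set (e := Rmin (eta n k cb M0) (tB / 2)).
    assert (He : 0 < e) by (apply Rmin_pos; [apply eta_pos; auto| lra]).
    assert (Hex : exists s, tB - e < s < tB /\ M0 <= lam 1%nat s).
    { apply NNPP. intros Hns. apply Hno. exists e. split; auto. intros t Ht.
      apply Rnot_le_lt. intros Hle. apply Hns. exists t. auto. }
    destruct Hex as [s [Hs1 Hs2]].
    assert (He1 : e <= eta n k cb M0) by apply Rmin_l.
    assert (He2 : e <= tB / 2) by apply Rmin_r.
    assert (Hsr : 0 < s < tB) by lra.
    destruct (lam1_lb n k cb rho0 lam0 tB lam rho s M0 Hn Hk Hcb Hr0 HtB Hs Hsr Hs2 ltac:(lra)) as [L1 HL1].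
    destruct (bounded_near n k cb rho0 lam0 tB lam rho s L1 Hn Hk Hcb Hr0 HtB Hch Hs Hsr HL1) as [M [HM HMb]].
    set (d := dl n k cb M).
    assert (Hd : 0 < d) by (apply dl_pos; auto).
    set (t1 := Rmax s (tB - d / 2)).
    assert (Ht1a : s <= t1) by apply Rmax_l.
    assert (Ht1b : tB - d / 2 <= t1) by apply Rmax_r.
    assert (Ht1c : t1 < tB) by (apply Rmax_lub_lt; lra).
    set (y1 := fun j => Yv lam rho j t1).
    assert (Hy1 : forall j, (j <= n)%nat -> Rabs (y1 j) <= M) by (intros; apply HMb; auto; lra).
    destruct (picard n k cb M t1 y1 HM Hy1) as [psi [Hpsi0 Hpsid]].
    fold d in Hpsid.
    set (Z := fun j t => if Rle_dec t t1 then Yv lam rho j t else psi j t).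
    apply (Hmax (t1 + d) (fun i t => Z i t) (fun t => Z O t)); [lra|].
    pose proof Hs as [H0 [Hl0 [Hd' [Hrl Hll]]]].
    assert (HZ : forall t, 0 < t < t1 + d -> forall j, (j <= n)%nat -> is_derive (Z j) t (Fv n k cb j (fun i => Z i t))).
    { intros t Ht j Hj. destruct (Rtotal_order t t1) as [Hlt|[Heq|Hgt]].
      - apply (is_derive_ext_loc (Yv lam rho j)).
        + apply (loc_lt t t1); auto. intros u Hu. unfold Z. destruct (Rle_dec u t1); [reflexivity| lra].
        + unfold Z. destruct (Rle_dec t t1); [|lra]. apply (Yv_der n k cb rho0 lam0 tB lam rho); auto; lra.
      - assert (HFv : Fv n k cb j (fun i => Z i t) = Fv n k cb j (fun i => Yv lam rho i t)).
        { unfold Z. destruct (Rle_dec t t1); [reflexivity| lra]. }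
        rewrite HFv.
        apply (glue_der (Z j) (Yv lam rho j) (psi j) t).
        + intros u Hu. unfold Z. destruct (Rle_dec u t1); [reflexivity| lra].
        + intros u Hu. unfold Z. destruct (Rle_dec u t1); [lra| reflexivity].
        + rewrite Heq, Hpsi0; auto.
        + apply (Yv_der n k cb rho0 lam0 tB lam rho); auto; lra.
        + rewrite (Fv_ext n k cb j (fun i => Yv lam rho i t) (fun i => psi i t)); auto.
          * apply Hpsid; auto; lra.
          * intros i Hi. rewrite Heq, Hpsi0; auto.
      - apply (is_derive_ext_loc (psi j)).
        + apply (loc_gt t t1); auto. intros u Hu. unfold Z. destruct (Rle_dec u t1); [lra| reflexivity].
        + unfold Z. destruct (Rle_dec t t1); [lra|]. apply Hpsid; auto; lra. }
    split; [|split; [|split; [|split]]].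
    - unfold Z. destruct (Rle_dec 0 t1); [simpl; auto| lra].
    - intros i Hi. unfold Z. destruct (Rle_dec 0 t1); [|lra]. destruct i; [lia|]. simpl. apply Hl0; auto.
    - intros t Ht. split.
      + intros i Hi. destruct i as [|i]; [lia|]. exact (HZ t Ht (S i) ltac:(lia)).
      + exact (HZ t Ht O ltac:(lia)).
    - assert (E : Z O 0 = rho 0) by (unfold Z; destruct (Rle_dec 0 t1); [reflexivity| lra]).
      rewrite E. apply (filterlim_ext_loc rho).
      + apply (right0_lt t1); [lra|]. intros u Hu. unfold Z. destruct (Rle_dec u t1); [reflexivity| lra].
      + exact Hrl.
    - intros i Hi.
      assert (E : Z i 0 = lam i 0) by (unfold Z; destruct (Rle_dec 0 t1); [destruct i; [lia| reflexivity]| lra]).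
      rewrite E. apply (filterlim_ext_loc (lam i)).
      + apply (right0_lt t1); [lra|]. intros u Hu. unfold Z. destruct (Rle_dec u t1); [destruct i; [lia| reflexivity]| lra].
      + apply Hll; auto. }
  exists 1%nat, n. split; [lia| split; [lia| split; [lia| split]]].
  - intros i Hi. replace i with 1%nat by lia. exact Hlim.
  - intros i Hi. lia.
Qed.
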